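(* Let $\Phi(\vec x)=\bigwedge_{i=1}^m f_i\mid g_i$ be a system of divisibility constraints in $d$ variables and let $p$ be a prime with $p\notin\mathbb P(\Phi)$. Then $\Phi$ has a solution $\vec b\in\mathbb N^d$ modulo $p$ such that $v_p(f_i(\vec b))=0$ for every $1\le i\le m$ and $\|\vec b\|_\infty\le p-1$.
   Context: Linear polynomials $f=a_1x_1+\dots+a_dx_d+c$ have integer coefficients. A system of divisibility constraints is $\Phi(\vec x)=\bigwedge_{i=1}^m f_i(\vec x)\mid g_i(\vec x)$ with $m\ge1$ and linear polynomials $f_i\neq 0$, $g_i$. For a prime $p$, $v_p$ is the $p$-adic valuation ($v_p(0)=\infty$); $\vec b\in\mathbb Z^d$ is a solution of $\Phi$ modulo $p$ if $f_i(\vec b)\ne0$ and $v_p(f_i(\vec b))\le v_p(g_i(\vec b))$ for all $i$. $\mathbb P(\Phi)$ is the set of primes $p$ with $p\le m$ or $p$ dividing some coefficient or constant of some left-hand side $f_i$. $\|\vec b\|_\infty$ is the maximum absolute value of the entries of $\vec b$. *)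

(* Defs.v *)
From HB Require Import structures.
From mathcomp Require Import all_boot all_order all_algebra.
Set Implicit Arguments. Unset Strict Implicit. Unset Printing Implicit Defensive.
Import Order.TTheory GRing.Theory Num.Theory.
Local Open Scope ring_scope.

Record linpoly (d : nat) := LinPoly { lcoef : 'I_d -> int ; lconst : int }.

Definition lp_eval (d : nat) (f : linpoly d) (b : 'I_d -> int) : int :=
  \sum_(j < d) lcoef f j * b j + lconst f.

Definition lp_nonzero (d : nat) (f : linpoly d) : Prop :=
  (exists j, lcoef f j != 0) \/ lconst f != 0.

(* p-adic valuation of a nonzero integer (v_p(0) = oo is handled separately) *)
Definition vp (p : nat) (x : int) : nat := logn p `|x|%N.

(* v_p(x) <= v_p(y), with the convention v_p(0) = oo *)
Definition vp_le (p : nat) (x y : int) : Prop :=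
  y = 0 \/ (x != 0 /\ (vp p x <= vp p y)%N).

Definition sol_mod (d m : nat) (f g : 'I_m -> linpoly d) (p : nat)
    (b : 'I_d -> int) : Prop :=
  forall i : 'I_m, lp_eval (f i) b != 0 /\ vp_le p (lp_eval (f i) b) (lp_eval (g i) b).

Definition in_PPhi (d m : nat) (f : 'I_m -> linpoly d) (p : nat) : Prop :=
  (p <= m)%N \/
  exists i : 'I_m,
    (exists j, lcoef (f i) j != 0 /\ (p %| `|lcoef (f i) j|)%N) \/
    (lconst (f i) != 0 /\ (p %| `|lconst (f i)|)%N).

(* Main.v *)
Require Import Defs.
From mathcomp Require Import all_boot all_order all_algebra intdiv.
Import Order.TTheory GRing.Theory Num.Theory.
Local Open Scope ring_scope.

Section Aux.
Variables (d m : nat) (f : 'I_m -> linpoly d) (p : nat).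

Definition S (i : 'I_m) (k : nat) (b : 'I_d -> nat) : int :=
  \sum_(j < d | (j < k)%N) lcoef (f i) j * (b j)%:Z + lconst (f i).

Definition Pk (k : nat) (b : 'I_d -> nat) : Prop :=
  (forall j, (b j < p)%N) /\
  forall i, (exists j : 'I_d, (k <= j)%N /\ ~~ (p %| `|lcoef (f i) j|)%N)
            \/ ~~ (p %| `|S i k b|)%N.

Lemma uniq_root (a s : int) (t1 t2 : nat) : prime p ->
  ~~ (p %| `|a|)%N -> (t1 < p)%N -> (t2 < p)%N ->
  (p %| `|(s + a * t1%:Z)%R|)%N -> (p %| `|(s + a * t2%:Z)%R|)%N -> t1 = t2.
Proof.
move=> pp na h1 h2 d1 d2.
have : (p%:Z %| (s + a * t1%:Z) - (s + a * t2%:Z))%Z.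
  have [q1 e1] := dvdzP (d1 : (p%:Z %| _)%Z).
  have [q2 e2] := dvdzP (d2 : (p%:Z %| _)%Z).
  by apply/dvdzP; exists (q1 - q2); rewrite e1 e2 mulrBl.
have -> : (s + a * t1%:Z) - (s + a * t2%:Z) = a * (t1%:Z - t2%:Z) by rewrite mulrBr opprD addrACA subrr add0r.
rewrite dvdzE /= abszM Euclid_dvdM // (negbTE na) /= => hd.
have hl : (`|(t1%:Z - t2%:Z)%R| < p)%N.
  case: (leqP t1 t2) => h.
  - by rewrite (distnEr h); apply: leq_ltn_trans (leq_subr _ _) h2.
  - by rewrite distnC (distnEr (ltnW h)); apply: leq_ltn_trans (leq_subr _ _) h1.

have h0 : `|(t1%:Z - t2%:Z)%R|%N = 0%N.
  apply/eqP; apply: contraTT hl; rewrite -lt0n -leqNgt => hpos.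
  exact: dvdn_leq.
by move/eqP: h0; rewrite absz_eq0 subr_eq0 => /eqP [].
Qed.

Lemma step (k : nat) (b : 'I_d -> nat) : (0 < m)%N -> prime p -> (m < p)%N -> (k < d)%N ->
  Pk k b -> exists b', Pk k.+1 b'.
Proof.
move=> m0 pp mp kd [hb hP].
pose K := Ordinal kd.
pose bad (i : 'I_m) (t : 'I_p) :=
  ~~ (p %| `|lcoef (f i) K|)%N && (p %| `|(S i k b + lcoef (f i) K * (val t)%:Z)%R|)%N.
have [t tgood] : exists t : 'I_p, forall i, ~~ bad i t.
  case: (pickP (fun t : 'I_p => [forall i, ~~ bad i t])) => [t /forallP ht|hno].
    by exists t.
  exfalso.
  pose i0 := Ordinal m0.
  pose gg (t : 'I_p) := odflt i0 [pick i | bad i t].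
  have hbad t : bad (gg t) t.
    rewrite /gg; case: pickP => [i //|hn].
    have := hno t; move/negbT; rewrite negb_forall => /existsP [i]; rewrite negbK.
    by rewrite hn.
  have inj : injective gg.
    move=> t1 t2 e; apply: val_inj.
    have := hbad t1; have := hbad t2; rewrite e /bad => /andP [na d2] /andP [_ d1].
    exact: (uniq_root _ _ _ _ pp na (ltn_ord t1) (ltn_ord t2) d1 d2).
  have := leq_card gg inj; rewrite !card_ord => hle.
  by move: (leq_trans mp hle); rewrite ltnn.
pose b' := fun j : 'I_d => if j == K then val t else b j.
have Ssplit i : S i k.+1 b' = S i k b + lcoef (f i) K * (val t)%:Z.
  rewrite /S (bigD1 K) //=.
  rewrite {1}/b' eqxx [RHS]addrC addrA; congr (_ + _ + _).
  apply: eq_big => [j|j hj].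
    rewrite ltnS leq_eqVlt -(inj_eq val_inj) /=.
    by case: (ltngtP j k).
  rewrite /b' ifN //; apply: contraTN hj => /eqP ->; by rewrite eqxx andbF.
exists b'; split.
  move=> j; rewrite /b'; case: eqP => _ //; exact: ltn_ord.
move=> i.
case: (hP i) => [[j [hj nj]]|ns].
  case: (ltnP k j) => hkj; first by left; exists j.
  right; rewrite Ssplit.
  have ejK : j = K by apply: val_inj => /=; apply/eqP; rewrite eqn_leq hj hkj.
  by have := tgood i; rewrite /bad -ejK nj.
right; rewrite Ssplit.
case na: (p %| `|lcoef (f i) K|)%N; last first.
  by have := tgood i; rewrite /bad na.
apply: contra ns => hs.
have [q1 e1] := dvdzP (hs : (p%:Z %| _)%Z).
have [q2 e2] := dvdzP (na : (p%:Z %| _)%Z).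
suff: (p%:Z %| S i k b)%Z by []. apply/dvdzP; exists (q1 - q2 * (val t)%:Z).
by rewrite mulrBl -e1 mulrAC -e2 addrK.
Qed.
End Aux.

Theorem mainTheorem8 (d m : nat) (f g : 'I_m -> linpoly d) (p : nat) :
  (0 < m)%N ->
  (forall i, lp_nonzero (f i)) ->
  prime p ->
  ~ in_PPhi f p ->
  exists b : 'I_d -> nat,
    sol_mod f g p (fun j => (b j)%:Z) /\
    (forall i, vp p (lp_eval (f i) (fun j => (b j)%:Z)) = 0%N) /\
    (forall j, (b j <= p - 1)%N).
Proof.
move=> m0 nz pp nP.
have mp : (m < p)%N by rewrite ltnNge; apply/negP => h; apply: nP; left.
have P0 : Pk _ _ f p 0 (fun _ => 0%N).
  split=> [j|i]; first exact: prime_gt0.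
  case: (nz i) => [[j hj]|hc].
    left; exists j; split => //; apply/negP => hd; apply: nP; right; exists i.
    by left; exists j.
  right; rewrite /S big_pred0 // add0r; apply/negP => hd; apply: nP; right.
  by exists i; right.
have reach k : (k <= d)%N -> exists b, Pk _ _ f p k b.
  elim: k => [|k IH] hk; first by exists (fun _ => 0%N).
  have [b hb] := IH (ltnW hk).
  exact: (step _ _ _ _ _ _ m0 pp mp hk hb).
have [b [hb hP]] := reach d (leqnn d).
have key i : ~~ (p %| `|lp_eval (f i) (fun j => (b j)%:Z)|)%N.
  have -> : lp_eval (f i) (fun j => (b j)%:Z) = S _ _ f i d b.
    by rewrite /S /lp_eval; congr (_ + _); apply: eq_bigl => j; rewrite ltn_ord.
  case: (hP i) => // [[j [hj _]]].
  by move: (ltn_ord j); rewrite ltnNge hj.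
have v0 i : vp p (lp_eval (f i) (fun j => (b j)%:Z)) = 0%N.
  by rewrite /vp lognE (negbTE (key i)) !andbF.
have ne i : lp_eval (f i) (fun j => (b j)%:Z) != 0.
  by apply: contraNN (key i) => /eqP ->; rewrite dvdn0.
exists b; split; last split.
- move=> i; split; first exact: ne.
  by right; split; [exact: ne | rewrite v0].
- exact: v0.
- by move=> j; rewrite leq_subRL ?prime_gt0 // add1n.
Qed.
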